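(* For any finite simple graphs $H_1$ and $H_2$, $$\rho_R(H_1+H_2)=\rho_R(H_1)+\rho_R(H_2),$$ where $H_1+H_2$ denotes the join of $H_1$ and $H_2$.
   Context: The join $H_1+H_2$ is the graph obtained from the disjoint union of $H_1$ and $H_2$ by adding all edges between $V(H_1)$ and $V(H_2)$. If $V(H)=\{h_1,\ldots,h_n\}$, a replication graph of $H$ is a graph $G$ obtained by replacing each vertex $h_i$ by a clique $K_i$ with $|K_i|\ge1$ (cliques pairwise vertex-disjoint), where two vertices in different cliques $K_i,K_j$ are adjacent iff $h_ih_j\in E(H)$. $\rho_R(H)$ is the minimum order of a replication graph $G$ of $H$ such that every proper vertex coloring of $G$ admits a choice of exactly one vertex from each clique $K_i$ with all chosen vertices of pairwise different colors. *)

(* Defs.v *)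
From Stdlib Require Import ClassicalEpsilon.
From mathcomp Require Import all_boot.
Set Implicit Arguments. Unset Strict Implicit. Unset Printing Implicit Defensive.

Definition simple_graph (V : finType) (e : rel V) : Prop :=
  symmetric e /\ irreflexive e.

Definition join_rel (V1 V2 : finType) (e1 : rel V1) (e2 : rel V2) : rel (V1 + V2)%type :=
  fun x y => match x, y with
             | inl a, inl b => e1 a b
             | inr a, inr b => e2 a b
             | _, _ => true
             end.

(* Replication graph of (V, e) with clique sizes m : vertices are pairs (v, i), i < m v;
   two distinct vertices are adjacent iff they lie in the same clique or their
   cliques correspond to adjacent vertices of H. *)
Definition repl_vertex (V : finType) (m : V -> nat) : finType := {v : V & 'I_(m v)}.

Definition repl_adj (V : finType) (e : rel V) (m : V -> nat) : rel (@repl_vertex V m) :=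
  fun x y => (x != y) && ((tag x == tag y) || e (tag x) (tag y)).

Definition proper_coloring (T : finType) (adj : rel T) (c : T -> nat) : Prop :=
  forall x y, adj x y -> c x != c y.

(* Every proper colouring of the replication graph admits a rainbow transversal
   of the cliques. *)
Definition good_replication (V : finType) (e : rel V) (m : V -> nat) : Prop :=
  (forall v, 0 < m v) /\
  forall c : @repl_vertex V m -> nat, proper_coloring (@repl_adj V e m) c ->
    exists f : forall v : V, 'I_(m v),
      injective (fun v : V => c (existT (fun w => 'I_(m w)) v (f v))).

Definition rhoR_pred (V : finType) (e : rel V) : pred nat :=
  fun n => if excluded_middle_informative
                (exists m : V -> nat, good_replication e m /\ \sum_(v : V) m v = n)
           then true else false.

(* rho_R(H): the minimum order of a good replication graph (0 if none existed;
   one always exists, so this convention is immaterial). *)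
Definition rhoR (V : finType) (e : rel V) : nat :=
  match excluded_middle_informative (exists n, rhoR_pred e n) with
  | left h => ex_minn h
  | right _ => 0
  end.

(* Main.v *)
Require Import Defs.
From mathcomp Require Import all_boot.
From Stdlib Require Import ClassicalEpsilon.
Set Implicit Arguments. Unset Strict Implicit. Unset Printing Implicit Defensive.


Definition phi1 (V1 V2 : finType) (m : (V1 + V2)%type -> nat)
  (x : repl_vertex (fun a => m (inl a))) : repl_vertex m :=
  existT (fun w => 'I_(m w)) (inl (tag x)) (tagged x).
Definition phi2 (V1 V2 : finType) (m : (V1 + V2)%type -> nat)
  (x : repl_vertex (fun a => m (inr a))) : repl_vertex m :=
  existT (fun w => 'I_(m w)) (inr (tag x)) (tagged x).

Definition psi1 (V1 V2 : finType) (m : (V1 + V2)%type -> nat) (x : repl_vertex m)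
  : option (repl_vertex (fun a => m (inl a))) :=
  let: existT y i := x in
  match y as y0 return 'I_(m y0) -> option (repl_vertex (fun a => m (inl a))) with
  | inl a => fun i => Some (existT (fun a => 'I_(m (inl a))) a i)
  | inr _ => fun _ => None end i.
Definition psi2 (V1 V2 : finType) (m : (V1 + V2)%type -> nat) (x : repl_vertex m)
  : option (repl_vertex (fun a => m (inr a))) :=
  let: existT y i := x in
  match y as y0 return 'I_(m y0) -> option (repl_vertex (fun a => m (inr a))) with
  | inr a => fun i => Some (existT (fun a => 'I_(m (inr a))) a i)
  | inl _ => fun _ => None end i.

Lemma phi1K V1 V2 m : pcancel (@phi1 V1 V2 m) (@psi1 V1 V2 m).
Proof. by case. Qed.
Lemma phi2K V1 V2 m : pcancel (@phi2 V1 V2 m) (@psi2 V1 V2 m).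
Proof. by case. Qed.
Lemma psi1S V1 V2 m x x' : @psi1 V1 V2 m x = Some x' -> phi1 x' = x.
Proof. by case: x => [[a|b] i] //= [<-]. Qed.
Lemma psi2S V1 V2 m x x' : @psi2 V1 V2 m x = Some x' -> phi2 x' = x.
Proof. by case: x => [[a|b] i] //= [<-]. Qed.
Lemma psiN V1 V2 m x : @psi1 V1 V2 m x = None -> @psi2 V1 V2 m x = None -> False.
Proof. by case: x => [[a|b] i]. Qed.

Lemma adj_phi1 (V1 V2 : finType) (e1 : rel V1) (e2 : rel V2) (m : (V1 + V2)%type -> nat) x y :
  @repl_adj _ (join_rel e1 e2) m (phi1 x) (phi1 y) = @repl_adj _ e1 (fun a => m (inl a)) x y.
Proof. by rewrite /repl_adj (inj_eq (pcan_inj (@phi1K V1 V2 m))). Qed.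
Lemma adj_phi2 (V1 V2 : finType) (e1 : rel V1) (e2 : rel V2) (m : (V1 + V2)%type -> nat) x y :
  @repl_adj _ (join_rel e1 e2) m (phi2 x) (phi2 y) = @repl_adj _ e2 (fun a => m (inr a)) x y.
Proof. by rewrite /repl_adj (inj_eq (pcan_inj (@phi2K V1 V2 m))). Qed.
Lemma adj_phi12 (V1 V2 : finType) (e1 : rel V1) (e2 : rel V2) (m : (V1 + V2)%type -> nat) x y :
  @repl_adj _ (join_rel e1 e2) m (phi1 x) (phi2 y).
Proof.
by [].
Qed.

Lemma good_join_intro (V1 V2 : finType) (e1 : rel V1) (e2 : rel V2)
  (m : (V1 + V2)%type -> nat) :
  good_replication e1 (fun a => m (inl a)) -> good_replication e2 (fun b => m (inr b)) ->
  good_replication (join_rel e1 e2) m.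
Proof.
move=> [p1 g1] [p2 g2]; split; first by case.
move=> c hc.
have [f1 i1] := g1 (fun x => c (phi1 x)) (fun x y h => hc _ _ (etrans (adj_phi1 _ _ _ _) h)).
have [f2 i2] := g2 (fun x => c (phi2 x)) (fun x y h => hc _ _ (etrans (adj_phi2 _ _ _ _) h)).
exists (fun w => match w as w0 return 'I_(m w0) with inl a => f1 a | inr b => f2 b end).
move=> [a|b] [a'|b'] /= H.
- by rewrite (i1 a a' H).
- have := hc _ _ (adj_phi12 e1 e2 (existT _ a (f1 a)) (existT _ b' (f2 b'))).
  by rewrite /= H eqxx.
- have := hc _ _ (adj_phi12 e1 e2 (existT _ a' (f1 a')) (existT _ b (f2 b))).
  by rewrite /= H eqxx.
- by rewrite (i2 b b' H).
Qed.

Lemma good_join_l (V1 V2 : finType) (e1 : rel V1) (e2 : rel V2)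
  (m : (V1 + V2)%type -> nat) :
  good_replication (join_rel e1 e2) m -> good_replication e1 (fun a => m (inl a)).
Proof.
move=> [p g]; split; first by move=> a; apply: p.
move=> c1 hc1.
pose c (x : repl_vertex m) : nat :=
  match psi1 x with Some x' => (c1 x').*2 | None => (enum_rank x : nat).*2.+1 end.
have hc : proper_coloring (@repl_adj _ (join_rel e1 e2) m) c.
  move=> x y hxy; rewrite /c.
  case ex: (psi1 x) => [x'|]; case ey: (psi1 y) => [y'|].
  - rewrite (inj_eq double_inj); apply: hc1.
    by rewrite -(adj_phi1 _ e2) (psi1S ex) (psi1S ey).
  - by apply/eqP => /(congr1 odd); rewrite /= !odd_double.
  - by apply/eqP => /(congr1 odd); rewrite /= !odd_double.
  - apply/eqP => H; move: hxy; rewrite /repl_adj => /andP [/eqP hne _]; apply: hne.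
    apply: enum_rank_inj; apply: val_inj; move: H => /eqP; rewrite eqSS.
    by rewrite (inj_eq double_inj) => /eqP.
have [f fi] := g c hc.
exists (fun a => f (inl a)) => a a' H.
have : inl a = inl a' :> (V1 + V2)%type by apply: fi; rewrite /c /= H.
by case.
Qed.

Lemma good_join_r (V1 V2 : finType) (e1 : rel V1) (e2 : rel V2)
  (m : (V1 + V2)%type -> nat) :
  good_replication (join_rel e1 e2) m -> good_replication e2 (fun a => m (inr a)).
Proof.
move=> [p g]; split; first by move=> a; apply: p.
move=> c1 hc1.
pose c (x : repl_vertex m) : nat :=
  match psi2 x with Some x' => (c1 x').*2 | None => (enum_rank x : nat).*2.+1 end.
have hc : proper_coloring (@repl_adj _ (join_rel e1 e2) m) c.
  move=> x y hxy; rewrite /c.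
  case ex: (psi2 x) => [x'|]; case ey: (psi2 y) => [y'|].
  - rewrite (inj_eq double_inj); apply: hc1.
    by rewrite -(adj_phi2 e1) (psi2S ex) (psi2S ey).
  - by apply/eqP => /(congr1 odd); rewrite /= !odd_double.
  - by apply/eqP => /(congr1 odd); rewrite /= !odd_double.
  - apply/eqP => H; move: hxy; rewrite /repl_adj => /andP [/eqP hne _]; apply: hne.
    apply: enum_rank_inj; apply: val_inj; move: H => /eqP; rewrite eqSS.
    by rewrite (inj_eq double_inj) => /eqP.
have [f fi] := g c hc.
exists (fun a => f (inr a)) => a a' H.
have : inr a = inr a' :> (V1 + V2)%type by apply: fi; rewrite /c /= H.
by case.
Qed.

Lemma rhoR_spec (V : finType) (e : rel V) :
  (exists m, good_replication e m) ->
  (exists m, good_replication e m /\ \sum_(v : V) m v = rhoR e) /\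
  (forall m, good_replication e m -> rhoR e <= \sum_(v : V) m v).
Proof.
move=> [m hm].
have inP : forall m, good_replication e m -> rhoR_pred e (\sum_(v : V) m v).
  move=> m' hm'; rewrite /rhoR_pred; case: excluded_middle_informative => // [[]].
  by exists m'.
rewrite /rhoR; case: excluded_middle_informative => [h|[]]; last by exists (\sum_(v : V) m v); apply: inP.
case: ex_minnP => n hn hmin; split; last by move=> m' hm'; apply: hmin; apply: inP.
by move: hn; rewrite /rhoR_pred; case: excluded_middle_informative.
Qed.

Lemma good_exists (V : finType) (e : rel V) : exists m, good_replication e m.
Proof.
exists (fun _ => #|V|); split; first by move=> v; apply/card_gt0P; exists v.
move=> c hc.
have cinj : forall v (i j : 'I_#|V|),
    c (existT (fun _ => 'I_#|V|) v i) = c (existT (fun _ => 'I_#|V|) v j) -> i = j.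
  move=> v i j H; apply/eqP; apply/negPn/negP => hij.
  have : @repl_adj _ e (fun _ => #|V|) (existT (fun _ => 'I_#|V|) v i)
           (existT (fun _ => 'I_#|V|) v j).
    rewrite /repl_adj /= eqxx andbT; apply/negP => /eqP H2; move/negP: hij; apply.
    by apply/eqP; move: (H2); rewrite -[i]/(tagged (existT (fun _ => 'I_#|V|) v i)) H2.
  by move/hc; rewrite H eqxx.
have key : forall s : seq V, uniq s -> exists f : V -> 'I_#|V|,
    {in s &, injective (fun v => c (existT (fun _ => 'I_#|V|) v (f v)))}.
  elim=> [|v s IH] us; first by exists (@enum_rank V).
  move: (us) => /= /andP [vs us']; have [f hf] := IH us'.
  have ssz : size s < #|V|.
    have := max_card (mem (v :: s)); by move/card_uniqP: us => ->.
  set S := [seq c (existT (fun _ => 'I_#|V|) u (f u)) | u <- s].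
  set L := [seq c (existT (fun _ => 'I_#|V|) v i) | i <- enum 'I_#|V|].
  have : ~~ all (fun x => x \in S) L.
    apply/negP => /allP sub.
    have := uniq_leq_size (s1 := L) (s2 := S).
    rewrite map_inj_uniq ?enum_uniq; last by move=> i j; apply: cinj.
    move=> /(_ isT sub); rewrite !size_map -enumT size_enum_ord.
    by rewrite leqNgt ssz.
  case/allPn => x /mapP [i _ ->] iS.
  exists (fun w => if w == v then i else f w).
  move=> x1 x2; rewrite !inE => /predU1P [->|x1s] /predU1P [->|x2s] /=; rewrite ?eqxx //.
  - have -> : (x2 == v) = false by apply/negbTE; apply: contraNneq vs => <-.
    move=> H; move: iS; rewrite H; case/negP; exact: map_f.
  - have -> : (x1 == v) = false by apply/negbTE; apply: contraNneq vs => <-.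
    move=> H; move: iS; rewrite -H; case/negP; exact: map_f.
  - have -> : (x1 == v) = false by apply/negbTE; apply: contraNneq vs => <-.
    have -> : (x2 == v) = false by apply/negbTE; apply: contraNneq vs => <-.
    exact: hf.
have [f hf] := key (enum V) (enum_uniq _).
by exists f => x y H; apply: hf; rewrite ?mem_enum.
Qed.

Theorem corollary5p1 (V1 V2 : finType) (e1 : rel V1) (e2 : rel V2) :
  simple_graph e1 -> simple_graph e2 ->
  rhoR (join_rel e1 e2) = rhoR e1 + rhoR e2.
Proof.
move=> _ _.
have [[m1 [hm1 s1]] min1] := rhoR_spec (good_exists e1).
have [[m2 [hm2 s2]] min2] := rhoR_spec (good_exists e2).
have [[m [hm s]] minj] := rhoR_spec (good_exists (join_rel e1 e2)).
apply/eqP; rewrite eqn_leq; apply/andP; split.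
- pose M (x : (V1 + V2)%type) := match x with inl a => m1 a | inr b => m2 b end.
  have := minj M (good_join_intro hm1 hm2).
  by rewrite big_sumType /= s1 s2.
- rewrite -s big_sumType; apply: leq_add.
  + by apply: min1; apply: good_join_l hm.
  + by apply: min2; apply: good_join_r hm.
Qed.
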